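(* Let $n=\prod_{j=1}^k p_j^{a_j}$ be the factorization of $n$ into powers of distinct primes, let $\omega\in(\mathbb{Z}/n\mathbb{Z})^\times$ and $r\in\mathbb{Z}/n\mathbb{Z}$, and let $X=\langle\omega\rangle r$. For each $j$, let $\psi_j:\mathbb{Z}/n\mathbb{Z}\to\mathbb{Z}/p_j^{a_j}\mathbb{Z}$ be the natural reduction homomorphism, let $x_j\in\mathbb{Z}/p_j^{a_j}\mathbb{Z}$ be the multiplicative inverse of $n/p_j^{a_j}$ modulo $p_j^{a_j}$, and let $X_j=\langle\psi_j(\omega)\rangle\, x_j\psi_j(r)\subseteq\mathbb{Z}/p_j^{a_j}\mathbb{Z}$. If the orbit sizes $|X_1|,\dots,|X_k|$ are pairwise coprime, then for every $y\in\mathbb{Z}/n\mathbb{Z}$, $$\sigma_X(y)=\prod_{j=1}^k \sigma_{X_j}(\psi_j(y)),$$ where $\sigma_{X_j}$ is the supercharacter of $\mathbb{Z}/p_j^{a_j}\mathbb{Z}$ attached to $X_j$.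
   Context: Write $e(\theta)=\exp(2\pi i\theta)$. For a positive integer $m$, a subgroup $A$ of $(\mathbb{Z}/m\mathbb{Z})^\times$ and $r\in\mathbb{Z}/m\mathbb{Z}$, let $X=Ar=\{ar:a\in A\}$ and define $\sigma_X:\mathbb{Z}/m\mathbb{Z}\to\mathbb{C}$ by $\sigma_X(y)=\sum_{x\in X}e\left(\frac{xy}{m}\right)$. Here $\langle\omega\rangle$ denotes the cyclic subgroup generated by $\omega$. *)

(* Defs.v *)
From HB Require Import structures.
From mathcomp Require Import all_boot all_order all_algebra all_fingroup all_field.
Set Implicit Arguments. Unset Strict Implicit. Unset Printing Implicit Defensive.
Import GRing.Theory Num.Theory.
Local Open Scope ring_scope.

(* zeta m = exp(2 pi i / m) in algC: m.-root (-1) is the m-th root of -1 of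
   minimal nonnegative argument, i.e. exp(i pi / m); its square is exp(2 pi i/m). *)
Definition zeta (m : nat) : algC := (m.-root (-1)) ^+ 2.

Definition e_frac (m k : nat) : algC := zeta m ^+ k.

(* The cyclic subgroup <w> of the unit group of Z/mZ, for w a unit
   (empty if w is not a unit, a case never used). *)
Definition unit_cycle (m : nat) (w : 'Z_m) : {set {unit 'Z_m}} :=
  if (insub w : option {unit 'Z_m}) is Some u then <[u]>%g else set0.

Definition orbitX (m : nat) (w r : 'Z_m) : {set 'Z_m} :=
  [set (val a * r)%R | a in unit_cycle w].

Definition sigma (m : nat) (X : {set 'Z_m}) (y : 'Z_m) : algC :=
  \sum_(x in X) e_frac m ((x : nat) * (y : nat))%N.

Definition psi (n q : nat) (x : 'Z_n) : 'Z_q := ((x : nat)%:R : 'Z_q).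

(* For the prime p | n with q = p^a = n`_p:
   X_p = <psi(w)> x_p psi(r), x_p = (n/q)^{-1} mod q. *)
Definition Xj (n : nat) (w r : 'Z_n) (p : nat) : {set 'Z_(n`_p)} :=
  orbitX (psi (n`_p) w) ((((n %/ n`_p)%N)%:R : 'Z_(n`_p))^-1 * psi (n`_p) r).

(* Main.v *)
Require Import Defs.
From HB Require Import structures.
From mathcomp Require Import all_boot all_order all_algebra all_fingroup all_field.
From mathcomp Require Import ring lra zify.
Import Order.TTheory GRing.Theory Num.Theory.
Local Open Scope ring_scope.

Section RealLemmas.
Variable R : realFieldType.
Implicit Types x y : R.
Lemma rA1 x1 y1 x2 y2 :
  x1*x1 + y1*y1 = 1 -> x2*x2 + y2*y2 = 1 -> 0 <= y1 -> 0 <= y2 -> 0 <= x1 + x2 ->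
  0 <= x1 * y2 + x2 * y1.
Proof.
move=> h1 h2 hy1 hy2 hs.
have [hx1|hx1] := lerP 0 x1; have [hx2|hx2] := lerP 0 x2.
- by apply: addr_ge0; apply: mulr_ge0.
- have hy: y1 <= y2 by nra.
  have p1: 0 <= (x1 + x2) * y2 by apply: mulr_ge0.
  have p2: 0 <= (- x2) * (y2 - y1) by apply: mulr_ge0; lra.
  lra.
- have hy: y2 <= y1 by nra.
  have p1: 0 <= (x1 + x2) * y1 by apply: mulr_ge0.
  have p2: 0 <= (- x1) * (y1 - y2) by apply: mulr_ge0; lra.
  lra.
- lra.
Qed.
Lemma rA2 x1 y1 x2 y2 :
  x1*x1 + y1*y1 = 1 -> x2*x2 + y2*y2 = 1 -> 0 <= y1 -> 0 <= y2 -> 0 <= x1 + x2 ->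
  x1 * x2 - y1 * y2 <= x1.
Proof.
move=> h1 h2 hy1 hy2 hs.
have hx2le: x2 <= 1 by nra.
have [hx1|hx1] := lerP 0 x1.
- have p1: x1 * x2 <= x1 * 1 by apply: ler_wpM2l.
  have p2: 0 <= y1 * y2 by apply: mulr_ge0.
  lra.
- have hy: y2 <= y1 by nra.
  have p1: y2 * y2 <= y1 * y2 by apply: ler_wpM2r.
  have p2: 0 <= (1 - x2) * (1 + x2 + x1) by apply: mulr_ge0; lra.
  nra.
Qed.
Lemma rC1 (xu yu xw yw : R) :
  xu*xu + yu*yu = 1 -> xw*xw + yw*yw = 1 -> 0 <= yu -> 0 <= yw -> xw <= xu ->
  0 <= yw * xu - xw * yu.
Proof.
move=> h1 h2 hy1 hy2 hs.
have [hxu|hxu] := lerP 0 xu.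
- have [hxw|hxw] := lerP xw 0.
  + have p1: 0 <= yw * xu by apply: mulr_ge0.
    have p2: 0 <= (- xw) * yu by apply: mulr_ge0; lra.
    lra.
  + have hy: yu <= yw by nra.
    have p1: 0 <= (yw - yu) * xu by apply: mulr_ge0; lra.
    have p2: 0 <= yu * (xu - xw) by apply: mulr_ge0; lra.
    lra.
- have hy: yw <= yu by nra.
  have p1: 0 <= (yu - yw) * (- xu) by apply: mulr_ge0; lra.
  have p2: 0 <= yu * (xu - xw) by apply: mulr_ge0; lra.
  lra.
Qed.
Lemma rD (xx yx xz yz : R) :
  xx*xx + yx*yx = 1 -> xz*xz + yz*yz = 1 -> 0 <= yx -> 0 <= yz -> xx < xz -> xz < 1 ->
  xx < xx * xz + yx * yz.
Proof.
move=> h1 h2 hy1 hy2 hlt hlt1.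
have [hx|hx] := lerP xx 0.
- have [hx0|hx0] := ltrP xx 0.
  + have p1: 0 < (- xx) * (1 - xz) by apply: mulr_gt0; lra.
    have p2: 0 <= yx * yz by apply: mulr_ge0.
    lra.
  + have e0: xx = 0 by lra.
    have hyx: yx = 1 by nra.
    have hyz: 0 < yz by nra.
    rewrite e0 hyx; lra.
- have hy: yz <= yx by nra.
  have p1: yz * yz <= yx * yz by apply: ler_wpM2r.
  have p2: 0 < (1 - xz) * (1 + xz - xx) by apply: mulr_gt0; lra.
  nra.
Qed.
Lemma rE x1 y1 x2 y2 :
  x1*x1 + y1*y1 = 1 -> x2*x2 + y2*y2 = 1 -> 0 <= y1 -> 0 <= y2 -> x1 = x2 -> y1 = y2.
Proof. move=> h1 h2 hy1 hy2 e; apply: le_anti; apply/andP; split; nra. Qed.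
End RealLemmas.

Definition up (z : algC) := (`|z| == 1) && (0 <= 'Im z).

Lemma ReIm2 (z : algC) : `|z| = 1 -> 'Re z * 'Re z + 'Im z * 'Im z = 1.
Proof. by move=> h; have := normC2_Re_Im z; rewrite h expr1n !expr2 => <-. Qed.

Ltac tr := first [ apply: val_inj => /=; apply: ReIm2; assumption | assumption ].

Lemma cA1 (u v : algC) : up u -> up v -> 0 <= 'Re u + 'Re v -> up (u * v).
Proof.
move=> /andP[/eqP nu iu] /andP[/eqP nv iv] s.
rewrite /up normrM nu nv mulr1 eqxx /= ImM.
have := @rA1 algR (in_algR (Creal_Re u)) (in_algR (Creal_Im u))
   (in_algR (Creal_Re v)) (in_algR (Creal_Im v)).
by apply; tr.
Qed.

Lemma cA2 (u v : algC) : up u -> up v -> 0 <= 'Re u + 'Re v -> 'Re (u * v) <= 'Re u.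
Proof.
move=> /andP[/eqP nu iu] /andP[/eqP nv iv] s.
rewrite ReM.
have := @rA2 algR (in_algR (Creal_Re u)) (in_algR (Creal_Im u))
   (in_algR (Creal_Re v)) (in_algR (Creal_Im v)).
by apply; tr.
Qed.

Lemma cC1 (u w : algC) : up u -> up w -> 'Re w <= 'Re u -> up (w * u^*).
Proof.
move=> /andP[/eqP nu iu] /andP[/eqP nw iw] s.
rewrite /up normrM norm_conjC nu nw mulr1 eqxx /= ImM Re_conj Im_conj.
have -> : 'Re w * - 'Im u + 'Re u * 'Im w = 'Im w * 'Re u - 'Re w * 'Im u by ring.
have := @rC1 algR (in_algR (Creal_Re u)) (in_algR (Creal_Im u))
   (in_algR (Creal_Re w)) (in_algR (Creal_Im w)).
by apply; tr.
Qed.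

Lemma cD (x z : algC) : up x -> up z -> 'Re x < 'Re z -> 'Re z < 1 ->
  'Re x < 'Re (x * z^*).
Proof.
move=> /andP[/eqP nx ix] /andP[/eqP nz iz] s1 s2.
rewrite ReM Re_conj Im_conj.
have -> : 'Re x * 'Re z - 'Im x * - 'Im z = 'Re x * 'Re z + 'Im x * 'Im z by ring.
have := @rD algR (in_algR (Creal_Re x)) (in_algR (Creal_Im x))
   (in_algR (Creal_Re z)) (in_algR (Creal_Im z)).
by apply; tr.
Qed.

Lemma cE (u v : algC) : up u -> up v -> 'Re u = 'Re v -> u = v.
Proof.
move=> /andP[/eqP nu iu] /andP[/eqP nv iv] s.
have hI : 'Im u = 'Im v.
  have := @rE algR (in_algR (Creal_Re u)) (in_algR (Creal_Im u))
   (in_algR (Creal_Re v)) (in_algR (Creal_Im v)).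
  move=> h; have := h ltac:(tr) ltac:(tr) ltac:(tr) ltac:(tr) ltac:(by apply: val_inj).
  by move/(congr1 val).
by rewrite [u]Crect [v]Crect s hI.
Qed.

Lemma unity_norm (z : algC) N : (0 < N)%N -> z ^+ N = 1 -> `|z| = 1.
Proof. by move=> hN h; apply/eqP; rewrite -(pexpr_eq1 hN) ?normr_ge0 // -normrX h normr1. Qed.

Arguments unity_norm {z N}.

Lemma Im_real (x : algC) : x \is Num.real -> 'Im x = 0.
Proof. by move/Creal_ImP. Qed.

Lemma up1 : up 1.
Proof. by rewrite /up normr1 eqxx Im_real ?rpred1 ?lexx. Qed.

Lemma upN1 : up (-1).
Proof. by rewrite /up normrN1 eqxx Im_real ?rpredN1 ?lexx. Qed.

Lemma N1_neq1 : (-1 : algC) != 1.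
Proof. by rewrite eq_sym -subr_eq0 opprK (_ : 1 + 1 = 2%:R) // pnatr_eq0. Qed.

Lemma conj_unit (u : algC) : `|u| = 1 -> u^-1 = u^*.
Proof. by move=> h; rewrite invC_norm h expr1n invr1 mul1r. Qed.

Lemma seq_maxf (T : eqType) (f : T -> algC) (s : seq T) : s != [::] ->
  (forall x, f x \is Num.real) -> exists2 x, x \in s & forall y, y \in s -> f y <= f x.
Proof.
elim: s => // x s IH _ hr.
case: s IH => [|x' s'] IH.
  by exists x; rewrite ?mem_seq1 // => y; rewrite mem_seq1 => /eqP ->.
have [x0 hx0 hm] := IH isT hr.
case/orP: (real_leVge (hr x) (hr x0)) => hle.
  exists x0; first by rewrite inE hx0 orbT.
  by move=> y; rewrite inE => /orP[/eqP ->|/hm].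
exists x; first by rewrite inE eqxx.
move=> y; rewrite inE => /orP[/eqP ->|/hm h]; first exact: lexx.
exact: le_trans hle.
Qed.

Lemma zeta_max (m : nat) : (0 < m)%N -> exists z : algC,
  [/\ z ^+ (2 * m) = 1, up z, z != 1 &
   forall x, x ^+ (2 * m) = 1 -> up x -> x != 1 -> 'Re x <= 'Re z].
Proof.
move=> hm; have hN : (0 < 2 * m)%N by rewrite muln_gt0.
have [w pw] := C_prim_root_exists hN.
pose P := fun k => up (w ^+ k) && (w ^+ k != 1).
pose s := [seq k <- iota 0 (2 * m) | P k].
have ex x : x ^+ (2 * m) = 1 -> up x -> x != 1 -> exists2 k, k \in s & x = w ^+ k.
  move=> hx ux nx; have [i ei] := prim_rootP pw hx.
  exists (nat_of_ord i) => //.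
  by rewrite mem_filter /P -ei ux nx mem_iota /= ltn_ord.
have [k0 hk0 _] : exists2 k, k \in s & -1 = w ^+ k.
  apply: ex; [by rewrite exprM sqrrN expr1n expr1n | exact: upN1 | exact: N1_neq1].
have [k hk hmax] := @seq_maxf _ (fun k => 'Re (w ^+ k)) s
  (ltac:(by case: (s) hk0)) (fun k => Creal_Re _).
move: (hk); rewrite mem_filter /P => /andP[/andP[uk nk] _].
exists (w ^+ k); split => //.
- by rewrite exprAC (prim_expr_order pw) expr1n.
- move=> x hx ux nx; have [j hj ->] := ex x hx ux nx.
  exact: hmax.
Qed.

Section ZetaProps.
Variables (m : nat) (z : algC).
Hypotheses (hm : (0 < m)%N) (hz1 : z ^+ (2 * m) = 1) (uz : up z) (nz1 : z != 1)
  (zmax : forall x, x ^+ (2 * m) = 1 -> up x -> x != 1 -> 'Re x <= 'Re z).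

Let hN : (0 < 2 * m)%N. Proof. by rewrite muln_gt0. Qed.

Let pow1 k : (z ^+ k) ^+ (2 * m) = 1.
Proof. by rewrite exprAC hz1 expr1n. Qed.

Lemma z_key u : up u -> u ^+ (2 * m) = 1 -> u != -1 -> 0 <= 'Re u + 'Re z.
Proof.
move=> uu hu nu.
case: (boolP (0 <= 'Re u + 'Re z)) => // hn.
have hlt : 'Re u + 'Re z < 0.
  by rewrite real_ltNge ?rpred0 ?rpredD ?Creal_Re.
have hx : (- u^*) ^+ (2 * m) = 1.
  by rewrite -mulN1r exprMn exprM sqrrN !expr1n mul1r -rmorphXn hu rmorph1.
have ux : up (- u^*).
  move: uu; rewrite /up normrN norm_conjC raddfN /= Im_conj opprK.
  done.
have nx : - u^* != 1.
  apply: contra nu => /eqP h.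
  by rewrite -[u]conjCK -[u^*]opprK h rmorphN rmorph1.
have := zmax _ hx ux nx.
rewrite raddfN /= Re_conj -subr_ge0 opprK addrC => h.
by rewrite h in hn.
Qed.

Lemma step_up k : (forall i, (i < k)%N -> z ^+ i != -1) -> up (z ^+ k).
Proof.
elim: k => [_|k IH h]; first by rewrite expr0 up1.
have uk : up (z ^+ k) by apply: IH => i hi; apply: h; exact: leqW.
rewrite exprSr; apply: cA1 => //; apply: z_key; [exact: uk | exact: pow1 | exact: h].
Qed.

Lemma step_mono k : (forall i, (i <= k)%N -> z ^+ i != -1) ->
  'Re (z ^+ k.+1) <= 'Re (z ^+ k).
Proof.
move=> h.
have uk : up (z ^+ k) by apply: step_up => i hi; apply: h; exact: ltnW.
rewrite exprSr; apply: cA2 => //; apply: z_key; [exact: uk | exact: pow1 | exact: h].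
Qed.

Lemma z_norm : `|z| = 1.
Proof. exact: unity_norm hN hz1. Qed.

Lemma z_neq0 : z != 0.
Proof. by rewrite -normr_eq0 z_norm oner_eq0. Qed.

Lemma z_desc w : w ^+ (2 * m) = 1 -> up w -> exists j, w = z ^+ j.
Proof.
move=> hw uw.
case: (boolP [exists j : 'I_(2 * m), w == z ^+ j]) => [/existsP[j /eqP ->]|hn].
  by exists j.
exfalso.
have hne j : w != z ^+ j.
  rewrite -(expr_mod j hz1).
  have := negP hn; move=> hn'; apply/negP => /eqP e; apply: hn'.
  by apply/existsP; exists (Ordinal (ltn_pmod j hN)); rewrite e.
pose xi j := w / z ^+ j.
have zj0 j : z ^+ j != 0 by rewrite expf_neq0 // z_neq0.
have xiS j : xi j.+1 = xi j * z^*.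
  by rewrite /xi exprSr invfM mulrA -conj_unit // z_norm.
have hxi1 j : xi j ^+ (2 * m) = 1.
  by rewrite /xi expr_div_n hw pow1 divr1.
have Rez1 : 'Re z < 1.
  have hr : 'Re z \is Num.real by apply: Creal_Re.
  have : 'Re z <= 1.
    by rewrite -z_norm; apply: le_trans (real_ler_norm hr) (leif_normC_Re_Creal z).1.
  rewrite le_eqVlt => /orP[/eqP e|//].
  case/negP: nz1; apply/eqP; apply: cE => //; first exact: up1.
  by rewrite e; apply/esym/Creal_ReP; apply: rpred1.
have step j : up (xi j) -> up (xi j.+1) /\ 'Re (xi j) < 'Re (xi j.+1).
  move=> uj.
  have n1 : xi j != 1.
    apply/eqP => e; move/eqP: (hne j); apply.
    by rewrite -[w](divfK (zj0 j)) -/(xi j) e mul1r.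
  have nz : xi j != z.
    apply/eqP => e; move/eqP: (hne j.+1); apply.
    by rewrite -[w](divfK (zj0 j)) -/(xi j) e -exprS.
  have le := zmax _ (hxi1 j) uj n1.
  have lt : 'Re (xi j) < 'Re z.
    rewrite lt_neqAle le andbT; apply: contra nz => /eqP e; apply/eqP; exact: cE.
  rewrite xiS; split; first by apply: cC1 => //; exact: ltW.
  exact: cD.
have upx j : up (xi j).
  elim: j => [|j /step[] //]; by rewrite /xi expr0 divr1.
have chain j : 'Re (xi 0) < 'Re (xi j.+1).
  elim: j => [|j IH]; first exact: (step 0 (upx 0)).2.
  exact: lt_trans IH (step _ (upx _)).2.
have := chain (2 * m).-1; rewrite prednK // /xi hz1 ?expr0 ?divr1.
by rewrite ltxx.
Qed.

Lemma z_prim : (2 * m).-primitive_root z.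
Proof.
have [k pk kd] := prim_order_exists hN hz1.
have [w pw] := C_prim_root_exists hN.
have hw := prim_expr_order pw.
have zk := prim_expr_order pk.
have wk : w ^+ k = 1.
  case: (boolP (0 <= 'Im w)) => hi.
  - have uw : up w by rewrite /up (unity_norm hN hw) eqxx hi.
    have [j ->] := z_desc _ hw uw.
    by rewrite exprAC zk expr1n.
  - have uw : up (w^*).
      rewrite /up norm_conjC (unity_norm hN hw) eqxx /= Im_conj oppr_ge0.
      by apply: ltW; rewrite real_ltNge ?rpred0 ?Creal_Im.
    have hw' : w^* ^+ (2 * m) = 1 by rewrite -rmorphXn hw rmorph1.
    have [j ej] := z_desc _ hw' uw.
    by rewrite -[w]conjCK ej -!rmorphXn exprAC zk expr1n rmorph1.
have d : (2 * m %| k)%N by rewrite (prim_order_dvd pw) wk.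
have e : k = (2 * m)%N by apply/eqP; rewrite eqn_dvd kd d.
by rewrite -e.
Qed.

Lemma z_half : z ^+ m = -1.
Proof.
have h2 : (z ^+ m) ^+ 2 = 1 by rewrite -exprM mulnC hz1.
move/eqP: h2; rewrite sqrf_eq1 => /orP[/eqP h|/eqP //].
have := prim_order_dvd z_prim m; rewrite h eqxx => /dvdn_leq => /(_ hm).
by rewrite -{2}[m]mul1n leq_pmul2r // ltnn.
Qed.

Lemma z_first i : (i < m)%N -> z ^+ i != -1.
Proof.
move=> hi; apply/eqP => e.
case: i hi e => [|i] hi e; first by move: N1_neq1; rewrite -e expr0 eqxx.
have h2 : z ^+ (i.+1 * 2) = 1 by rewrite exprM e sqrrN expr1n.
have := prim_order_dvd z_prim (i.+1 * 2); rewrite h2 eqxx => /dvdn_leq.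
move=> /(_ isT); lia.
Qed.

Lemma z_up i : (i <= m)%N -> up (z ^+ i).
Proof. move=> hi; apply: step_up => j hj; apply: z_first; lia. Qed.

Lemma z_mono i : (i < m)%N -> 'Re (z ^+ i.+1) <= 'Re (z ^+ i).
Proof. move=> hi; apply: step_mono => j hj; apply: z_first; lia. Qed.
End ZetaProps.

Definition rt (m : nat) : algC := m.-root (-1).

Lemma root_good m : (0 < m)%N ->
  [/\ (2 * m).-primitive_root (rt m),
      forall i, (i <= m)%N -> up (rt m ^+ i) &
      forall i, (i < m)%N -> 'Re (rt m ^+ i.+1) <= 'Re (rt m ^+ i)].
Proof.
move=> hm; have [z [hz1 uz nz1 zmax]] := @zeta_max m hm.
suff -> : rt m = z.
  split; [apply: z_prim | apply: z_up | apply: z_mono] => //.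
rewrite /rt; set a := m.-root (-1).
have am : a ^+ m = -1 by apply: rootCK.
have a2 : a ^+ (2 * m) = 1 by rewrite mulnC exprM am sqrrN expr1n.
have ua : up a.
  rewrite /up (unity_norm (N := (2 * m)%N)) ?muln_gt0 // eqxx /=.
  case: m hm @a am a2 {hz1 zmax} => // [[|m']] _ /=.
    by rewrite root1C Im_real ?rpredN1.
  by move=> *; apply: Im_rootC_ge0.
have na : a != 1.
  by apply/eqP => e; move: am N1_neq1; rewrite e expr1n => <-; rewrite eqxx.
have le1 := zmax _ a2 ua na.
have le2 : 'Re z <= 'Re a.
  apply: rootC_Re_max => //; first exact: z_half.
  by case/andP: uz.
by apply: cE => //; apply: le_anti; rewrite le1 le2.
Qed.

Lemma root_pow d q : (0 < d)%N -> (0 < q)%N -> rt (d * q) ^+ d = rt q.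
Proof.
move=> hd hq; have hn : (0 < d * q)%N by rewrite muln_gt0 hd.
have [pa ua ma] := @root_good _ hn.
set a := rt (d * q) in pa ua ma *.
have chain i k : (i + k <= d * q)%N -> 'Re (a ^+ (i + k)) <= 'Re (a ^+ i).
  elim: k => [|k IH] h; first by rewrite addn0.
  have h1 : (i + k < d * q)%N by rewrite -addnS.
  rewrite addnS; apply: le_trans (ma (i + k) h1) (IH (ltnW h1)).
set b := a ^+ d.
have pb : (2 * q).-primitive_root b.
  have := dvdn_prim_root pa (m := (2 * q)%N).
  rewrite mulnCA mulnK ?muln_gt0 //; apply.
  by rewrite dvdn_mull.
have bq : b ^+ q = -1 by rewrite /b -exprM /a /rt rootCK.
have ub : up b by apply: ua; rewrite leq_pmulr.
have [pc uc mc] := @root_good _ hq.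
have uc1 : up (rt q) by rewrite -[rt q]expr1; apply: uc.
have cq : rt q ^+ q = -1 by rewrite /rt rootCK.
have c2 : rt q ^+ (2 * q) = 1 by rewrite mulnC exprM cq sqrrN expr1n.
have [i ei] := prim_rootP pb c2.
have le1 : 'Re (rt q) <= 'Re b.
  rewrite ei.
  have hi := ltn_ord i.
  case: (posnP i) => [i0|ipos].
    by move: cq N1_neq1; rewrite ei i0 expr0 expr1n => <-; rewrite eqxx.
  have gen j : (0 < j)%N -> (j <= q)%N -> 'Re (b ^+ j) <= 'Re b.
    move=> j0 jq; rewrite /b -exprM.
    have -> : (d * j = d + (d * j - d))%N by rewrite subnKC // leq_pmulr.
    by apply: chain; rewrite subnKC ?leq_pmulr // leq_pmul2l.
  case: (leqP i q) => iq; first exact: gen.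
  set j := (2 * q - i)%N.
  have hb1 : b ^+ (2 * q) = 1 by apply: prim_expr_order.
  have ebj : b ^+ i = (b ^+ j)^*.
    have nj : `|b ^+ j| = 1 by apply: (unity_norm (N := (2 * q)%N)); rewrite ?muln_gt0 // exprAC hb1 expr1n.
    rewrite -conj_unit //; apply: (mulIf (x := b ^+ j)).
      by rewrite -normr_eq0 nj oner_eq0.
    rewrite mulVf; last by rewrite -normr_eq0 nj oner_eq0.
    by rewrite -exprD subnKC ?hb1 //; apply: ltnW.
  rewrite ebj Re_conj; apply: gen; rewrite /j ?subn_gt0 ?leq_subLR //.
  move: iq; clear; lia.
have le2 : 'Re b <= 'Re (rt q).
  apply: rootC_Re_max => //; by case/andP: ub.
by apply: cE => //; apply: le_anti; rewrite le1 le2.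
Qed.

Lemma zeta_pow d q : (0 < d)%N -> (0 < q)%N -> zeta (d * q) ^+ d = zeta q.
Proof. by move=> hd hq; rewrite /zeta -!/(rt _) exprAC root_pow. Qed.

Lemma zeta_order m : (0 < m)%N -> zeta m ^+ m = 1.
Proof. by move=> hm; rewrite /zeta exprAC rootCK // sqrrN expr1n. Qed.

Lemma orbit_param m (x r : 'Z_m) : x \is a GRing.unit ->
  exists2 L, (0 < L)%N &
   [/\ forall k k', (x ^+ k * r == x ^+ k' * r) = (k == k' %[mod L]),
       #|orbitX x r| = L &
       forall g : 'Z_m -> algC,
         \sum_(y in orbitX x r) g y = \sum_(k < L) g (x ^+ k * r)].
Proof.
move=> ux.
have [u eu ec] : exists2 u : {unit 'Z_m}, val u = x & unit_cycle x = <[u]>%g.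
  rewrite /unit_cycle; case: insubP => [u _ eu|]; first by exists u.
  by rewrite ux.
rewrite /orbitX ec.
pose f k := x ^+ k * r.
have fS k j : f (k + j)%N = x ^+ k * f j by rewrite /f exprD mulrA.
have ex : exists d, (0 < d)%N && (f d == r).
  exists #[u]%g; rewrite order_gt0 /= /f -eu -FinRing.val_unitX expg_order mul1r.
  done.
case: (ex_minnP ex) => L /andP[L0 /eqP fL] Lmin.
have fmul j : f (j * L)%N = r.
  elim: j => [|j IH]; first by rewrite mul0n /f expr0 mul1r.
  by rewrite mulSn fS IH.
have per k : f k = f (k %% L)%N.
  by rewrite {1}(divn_eq k L) addnC fS fmul.
have inj i j : (i < L)%N -> (j < L)%N -> f i = f j -> i = j.
  wlog hij : i j / (i <= j)%N.
    move=> H hi hj e; case: (leqP i j) => h; first exact: H.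
    by apply/esym; apply: H => //; apply: ltnW.
  move=> hi hj e.
  case: (ltngtP i j) hij => // hlt _.
  have e2 : f (j - i)%N = r.
    apply: (mulrI (unitrX i ux)).
    by rewrite -(fS i (j - i)%N) subnKC ?(ltnW hlt) // -e.
  have := Lmin (j - i)%N; rewrite subn_gt0 hlt e2 eqxx => /(_ isT).
  move=> hle; have : (j < L)%N := hj; lia.
have eqm k k' : (f k == f k') = (k == k' %[mod L]).
  rewrite (per k) (per k'); apply/eqP/eqP => [|->] //.
  by apply: inj; apply: ltn_pmod.
have eS : [set val a * r | a in <[u]>%g] = [set f (nat_of_ord k) | k in [set: 'I_L]].
  apply/setP => y; apply/imsetP/imsetP => [[a /cycleP[i ->] ->]|[k _ ->]].
    exists (Ordinal (ltn_pmod i L0)); first by rewrite inE.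
    by rewrite /= -per /f FinRing.val_unitX eu.
  by exists (u ^+ k)%g; [apply: mem_cycle | rewrite FinRing.val_unitX eu].
have injf : {in [set: 'I_L] &, injective (fun k : 'I_L => f k)}.
  by move=> a b _ _ /inj e; apply: val_inj; apply: e.
exists L => //; split => //.
- by rewrite eS card_in_imset // cardsT card_ord.
- move=> g; rewrite eS big_imset //=.
  by apply: eq_bigl => k; rewrite inE.
Qed.

Lemma per_mul (G : nat -> algC) A : (forall k, G (k + A)%N = G k) ->
  forall c k, G (k + c * A)%N = G k.
Proof.
move=> h; elim=> [|c IH] k; first by rewrite mul0n addn0.
by rewrite mulSn addnCA addnC h IH.
Qed.

Lemma per_mod (G : nat -> algC) A : (forall k, G (k + A)%N = G k) ->
  forall k, G k = G (k %% A)%N.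
Proof. by move=> h k; rewrite {1}(divn_eq k A) addnC per_mul. Qed.
Arguments per_mod {G A}.

Lemma per_dvd (G : nat -> algC) A B : (forall k, G (k + A)%N = G k) -> (A %| B)%N ->
  forall k, G (k + B)%N = G k.
Proof. by move=> h /dvdnP[c ->] k; rewrite per_mul. Qed.
Arguments per_dvd {G A B}.

Lemma crt_sum2 A B (G H : nat -> algC) : coprime A B -> (0 < A)%N -> (0 < B)%N ->
  (forall k, G (k + A)%N = G k) -> (forall k, H (k + B)%N = H k) ->
  \sum_(k < (A * B)%N) G k * H k = (\sum_(a < A) G a) * (\sum_(b < B) H b).
Proof.
move=> cAB hA hB hG hH.
rewrite big_distrlr /= pair_bigA /=.
pose h (k : 'I_(A * B)) : 'I_A * 'I_B :=
  (Ordinal (ltn_pmod k hA), Ordinal (ltn_pmod k hB)).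
have injh : injective h.
  move=> k k' [e1 e2]; apply: val_inj => /=.
  have : (k == k' %[mod A * B]).
    by rewrite chinese_remainder // e1 e2 !eqxx.
  by rewrite !modn_small ?ltn_ord // => /eqP.
have bh : bijective h.
  by apply: inj_card_bij => //; rewrite card_prod !card_ord.
rewrite (reindex h) /=; last by apply: onW_bij.
by apply: eq_bigr => k _; rewrite -(per_mod hG) -(per_mod hH).
Qed.

Lemma coprime_big (a : nat) (s : seq nat) (Lf : nat -> nat) :
  (forall p, p \in s -> coprime a (Lf p)) -> coprime a (\prod_(p <- s) Lf p).
Proof.
elim: s => [|b s IH] h; first by rewrite big_nil coprimen1.
rewrite big_cons coprimeMr h ?mem_head // IH // => p hp.
by apply: h; rewrite inE hp orbT.
Qed.

Lemma prod_gt0 (s : seq nat) (Lf : nat -> nat) :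
  (forall p, p \in s -> 0 < Lf p)%N -> (0 < \prod_(p <- s) Lf p)%N.
Proof.
elim: s => [|b s IH] h; first by rewrite big_nil.
rewrite big_cons muln_gt0 h ?mem_head // IH // => p hp.
by apply: h; rewrite inE hp orbT.
Qed.

Lemma dvd_big (s : seq nat) (Lf : nat -> nat) p :
  p \in s -> (Lf p %| \prod_(p <- s) Lf p)%N.
Proof. by move=> hp; rewrite (big_rem p) //= dvdn_mulr. Qed.

Lemma crt_sum (s : seq nat) (Lf : nat -> nat) (G : nat -> nat -> algC) :
  uniq s -> (forall p, p \in s -> 0 < Lf p)%N ->
  (forall p p', p \in s -> p' \in s -> p != p' -> coprime (Lf p) (Lf p')) ->
  (forall p k, p \in s -> G p (k + Lf p)%N = G p k) ->
  \sum_(k < (\prod_(p <- s) Lf p)%N) \prod_(p <- s) G p k =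
  \prod_(p <- s) \sum_(k < Lf p) G p k.
Proof.
elim: s => [|a s IH] /= us hpos hcop hper.
  by rewrite !big_nil big_ord1 big_nil.
case/andP: us => nas us.
have ins p : p \in s -> p \in a :: s by move=> hp; rewrite inE hp orbT.
rewrite [(\prod_(p <- a :: s) Lf p)%N]big_cons.
under eq_bigr do rewrite big_cons.
rewrite [RHS]big_cons.

rewrite (@crt_sum2 _ _ (G a) (fun k => \prod_(j <- s) G j k)) ?hpos ?mem_head ?big_cons //.
- rewrite IH // => [p hp|p p' hp hp'|p k hp]; [exact: hpos (ins _ hp) | exact: hcop (ins _ hp) (ins _ hp') | exact: hper (ins _ hp)].
- apply: coprime_big => p hp; apply: hcop; rewrite ?mem_head ?ins //.
  by apply: contraNneq nas => ->.
- by apply: prod_gt0 => p hp; apply: hpos; apply: ins.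
- by move=> k; apply: hper; rewrite mem_head.
- move=> k; apply: eq_big_seq => p hp.
  by apply: (per_dvd (hper p^~ (ins _ hp))); apply: dvd_big.
Qed.

Lemma mod_parts n a b : (0 < n)%N ->
  (forall p, p \in primes n -> a = b %[mod n`_p]) -> a = b %[mod n].
Proof.
move=> hn; wlog hab : a b / (b <= a)%N.
  move=> H h; case: (leqP b a) => hba; first exact: H.
  by apply/esym; apply: H; [apply: ltnW | move=> p hp; apply/esym; apply: h].
move=> h; apply/eqP; rewrite eqn_mod_dvd //.
apply/dvdn_partP => // p hp.
by rewrite -eqn_mod_dvd //; apply/eqP; apply: h.
Qed.

Lemma Zq_mod q a b : (1 < q)%N -> (a%:R : 'Z_q) = b%:R -> a = b %[mod q].
Proof. by move=> hq /(congr1 val); rewrite /= !val_Zp_nat. Qed.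

Lemma Zq_dvd0 q k : (1 < q)%N -> (q %| k)%N -> (k%:R : 'Z_q) = 0.
Proof. by move=> hq /eqP hk; rewrite -Zp_nat_mod // hk. Qed.

Section Psi.
Variables (n q : nat).
Hypotheses (hn : (1 < n)%N) (hq : (1 < q)%N) (hqn : (q %| n)%N).

Lemma psi_nat k : psi q (k%:R : 'Z_n) = k%:R.
Proof.
rewrite /psi val_Zp_nat // -(Zp_nat_mod hq (k %% n)) modn_dvdm //.
by rewrite Zp_nat_mod.
Qed.

Lemma psiM (a b : 'Z_n) : psi q (a * b) = psi q a * psi q b.
Proof.
rewrite -{1}[a]natr_Zp -{1}[b]natr_Zp -natrM psi_nat natrM.
done.
Qed.

Lemma psi1 : psi q (1 : 'Z_n) = 1.
Proof. by have := psi_nat 1; rewrite !mulr1n. Qed.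

Lemma psiX (a : 'Z_n) k : psi q (a ^+ k) = psi q a ^+ k.
Proof. by elim: k => [|k IH]; rewrite ?expr0 ?psi1 // !exprS psiM IH. Qed.

Lemma psi_unit (a : 'Z_n) : a \is a GRing.unit -> psi q a \is a GRing.unit.
Proof.
move=> ua; apply/unitrPr; exists (psi q a^-1).
by rewrite -psiM mulrV // psi1.
Qed.
End Psi.

Definition cZ n p : 'Z_(n`_p) := ((n %/ n`_p)%:R)^-1.
Definition phi n p (x : 'Z_n) : 'Z_(n`_p) := cZ n p * psi (n`_p) x.

Section Parts.
Variables (n p : nat).
Hypotheses (hn : (1 < n)%N) (hp : p \in primes n).

Lemma q_gt1 : (1 < n`_p)%N.
Proof. by rewrite p_part_gt1. Qed.

Lemma q_dvd : (n`_p %| n)%N.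
Proof. exact: dvdn_part. Qed.

Lemma q_cop : coprime (n`_p) (n %/ n`_p).
Proof.
have -> : (n %/ n`_p = n`_p^')%N.
  by rewrite -{1}(partnC p (ltnW hn)) mulKn // part_gt0.
exact: coprime_partC.
Qed.

Lemma c_unit : ((n %/ n`_p)%:R : 'Z_(n`_p)) \is a GRing.unit.
Proof. by rewrite unitZpE ?q_gt1 // q_cop. Qed.

Lemma q_other p0 : p0 \in primes n -> p0 != p -> (n`_p0 %| n %/ n`_p)%N.
Proof.
move=> hp0 ne.
have cop : coprime (n`_p0) (n`_p).
  rewrite !p_part; apply: coprimeXl; apply: coprimeXr.
  move: hp0 hp; rewrite !mem_primes => /and3P[pr0 _ _] /and3P[pr _ _].
  by rewrite prime_coprime // dvdn_prime2 // ne.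
by rewrite -(Gauss_dvdl _ cop) divnK ?dvdn_part.
Qed.

Lemma zeta_part : zeta (n`_p) = zeta n ^+ (n %/ n`_p).
Proof.
have hq : (0 < n`_p)%N by apply: part_gt0.
have hd : (0 < n %/ n`_p)%N.
  by rewrite divn_gt0 // dvdn_leq ?q_dvd //; apply: ltnW.
by rewrite -(@zeta_pow _ _ hd hq) divnK // q_dvd.
Qed.
End Parts.

Lemma natrZM q (a b : 'Z_q) : ((a * b)%N%:R : 'Z_q) = a * b.
Proof. by rewrite natrM !natr_Zp. Qed.

Lemma F1 n (hn : (1 < n)%N) (x y : 'Z_n) :
  e_frac n (x * y)%N =
  \prod_(p <- primes n) e_frac (n`_p) (phi n p x * psi (n`_p) y)%N.
Proof.
have hn0 : (0 < n)%N by apply: ltnW.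
rewrite /e_frac.
under eq_big_seq => p hp do rewrite (@zeta_part _ p hn) -exprM.
rewrite prodrXr -(expr_mod _ (@zeta_order _ hn0)).
rewrite -[in RHS](expr_mod _ (@zeta_order _ hn0)); congr (_ ^+ _).
apply/esym; apply: mod_parts => // p0 hp0.
apply: Zq_mod; first by apply: (@q_gt1 n p0).
rewrite natr_sum (bigD1_seq p0) ?primes_uniq // big1_seq ?addr0.
  rewrite natrM natrZM /phi /cZ mulrA mulrA mulrV ?mul1r; last exact: c_unit.
  by rewrite /psi natrM /= addr0.
move=> p /andP[ne hp]; rewrite natrM Zq_dvd0 ?mul0r //; first by apply: (@q_gt1 n p0).
by apply: q_other => //; rewrite eq_sym.
Qed.

Lemma prod_dvdP (s : seq nat) (Lf : nat -> nat) k :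
  (forall p p', p \in s -> p' \in s -> p != p' -> coprime (Lf p) (Lf p')) ->
  uniq s -> ((\prod_(p <- s) Lf p)%N %| k)%N = all (fun p => Lf p %| k)%N s.
Proof.
elim: s => [|a s IH] hc /=; first by rewrite big_nil dvd1n.
case/andP => nas us; have ins p : p \in s -> p \in a :: s by move=> hp; rewrite inE hp orbT.
rewrite big_cons Gauss_dvd; last first.
  apply: coprime_big => p hp; apply: hc; rewrite ?mem_head ?ins //.
  by apply: contraNneq nas => ->.
by rewrite IH // => p p' hp hp'; apply: hc; apply: ins.
Qed.

Lemma Zn_lt n (a : 'Z_n) : (1 < n)%N -> (a < n)%N.
Proof. by move=> hn; apply: leq_trans (ltn_ord a) _; rewrite Zp_cast. Qed.

Lemma phi_inj n (a b : 'Z_n) : (1 < n)%N ->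
  (forall p, p \in primes n -> phi n p a = phi n p b) -> a = b.
Proof.
move=> hn h; apply: val_inj => /=.
have : (a : nat) = b %[mod n].
  apply: mod_parts; first exact: ltnW.
  move=> p hp; apply: Zq_mod; first exact: (@q_gt1 n p).
  have cu : ((n %/ n`_p)%:R : 'Z_(n`_p))^-1 \is a GRing.unit.
    by rewrite unitrV; apply: c_unit.
  have := h p hp; rewrite /phi /cZ.
  by move/(mulrI cu).
by rewrite !modn_small ?Zn_lt.
Qed.

Theorem theorem2p1 (n : nat) (hn : (1 < n)%N) (w : {unit 'Z_n}) (r : 'Z_n) :
  (forall p1 p2 : nat, p1 \in primes n -> p2 \in primes n -> p1 != p2 ->
     coprime #|Xj (val w) r p1| #|Xj (val w) r p2|) ->
  forall y : 'Z_n,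
    sigma (orbitX (val w) r) y =
    \prod_(p <- primes n) sigma (Xj (val w) r p) (psi (n`_p) y).
Proof.
move=> hcop y.
have uw : val w \is a GRing.unit by apply: valP.
have [L L0 [eqX cardX sumX]] := @orbit_param _ _ r uw.
pose fp p k : 'Z_(n`_p) := psi (n`_p) (val w) ^+ k * (cZ n p * psi (n`_p) r).
pose Lf p := #|Xj (val w) r p|.
have hLf p : p \in primes n ->
   [/\ (0 < Lf p)%N,
       forall k k', (fp p k == fp p k') = (k == k' %[mod Lf p]) &
       forall g : 'Z_(n`_p) -> algC,
         \sum_(x in Xj (val w) r p) g x = \sum_(k < Lf p) g (fp p k)].
  move=> hp.
  have up : psi (n`_p) (val w) \is a GRing.unit.
    apply: psi_unit => //; [exact: (@q_gt1 n p) | exact: q_dvd].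
  have [Lp Lp0 [eqp cardp sump]] := @orbit_param _ _ (cZ n p * psi (n`_p) r) up.
  have eL : Lf p = Lp by rewrite /Lf /Xj.
  by rewrite eL; split.
have phif p k : p \in primes n -> phi n p (val w ^+ k * r) = fp p k.
  move=> hp; have hq := @q_gt1 n p hp; have hd := @q_dvd n p.
  by rewrite /phi psiM // psiX // mulrCA.
have key k : (L %| k)%N = ((\prod_(p <- primes n) Lf p)%N %| k)%N.
  have e1 : (L %| k)%N = (val w ^+ k * r == val w ^+ 0 * r).
    by rewrite eqX /dvdn mod0n.
  rewrite e1 (@prod_dvdP _ Lf k (fun p p' hp hp' ne => hcop p p' hp hp' ne) (primes_uniq n)).
  apply/idP/allP => [/eqP e p hp|h].
    have [_ hp2 _] := hLf p hp.
    by rewrite /dvdn -(mod0n (Lf p)) -hp2 -!phif // e.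
  apply/eqP; apply: phi_inj => // p hp.
  rewrite !phif //; apply/eqP.
  have [_ hp2 _] := hLf p hp.
  by rewrite hp2 mod0n; apply: h.
have hL : L = (\prod_(p <- primes n) Lf p)%N.
  by apply/eqP; rewrite eqn_dvd key dvdnn -key dvdnn.
rewrite /sigma sumX.
pose G p k := e_frac (n`_p) (fp p k * psi (n`_p) y)%N.
rewrite (eq_big_seq (fun p => \sum_(k < Lf p) G p k)); last first.
  by move=> p hp; have [_ _ ->] := hLf p hp.
have hpos p : p \in primes n -> (0 < Lf p)%N.
  by move=> hp; have [] := hLf p hp.
have hper p k : p \in primes n -> G p (k + Lf p)%N = G p k.
  move=> hp; have [_ hp2 _] := hLf p hp.
  rewrite /G (_ : fp p (k + Lf p)%N = fp p k) //; apply/eqP.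
  by rewrite hp2 modnDr.
rewrite -(@crt_sum (primes n) Lf G (primes_uniq n) hpos
  (fun p p' hp hp' ne => hcop p p' hp hp' ne) hper).
rewrite hL; apply: eq_bigr => k _.
rewrite F1 //; apply: eq_big_seq => p hp.
by rewrite /G phif.
Qed.
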